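(* Let $p$ be the POP of length 5 defined by the relations $1>2$, $1>3$, $4>2$ and $4>3$ (label $5$ isolated), and let $a(n)=|S_n(p)|$. Then $$\sum_{n\geq 0}a(n)x^n=\frac{1-7x+14x^2-6x^3+4x^4}{(1-4x+2x^2)^2}.$$
   Context: An $n$-permutation is a word $\pi=\pi_1\cdots\pi_n$ containing each of $1,\ldots,n$ exactly once; $S_n$ is the set of $n$-permutations ($S_0$ consists of the empty permutation). A partially ordered pattern (POP) $p$ of length $k$ is a partial order on the label set $\{1,\ldots,k\}$; it is described by a set of generating relations, where a relation $x>y$ means that in an occurrence the entry in the $x$-th chosen position must be larger than the entry in the $y$-th chosen position, and labels not involved in any relation are unconstrained. An $n$-permutation $\pi$ contains $p$ if there are indices $1\leq i_1<\cdots<i_k\leq n$ such that $\pi_{i_x}>\pi_{i_y}$ whenever $x>y$ in the partial order; otherwise $\pi$ avoids $p$. $S_n(p)$ denotes the set of $n$-permutations avoiding $p$. *)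

(* Defs.v *)
From HB Require Import structures.
From mathcomp Require Import all_boot all_order all_algebra all_fingroup.
Set Implicit Arguments. Unset Strict Implicit. Unset Printing Implicit Defensive.
Import GRing.Theory.

(* A POP of length k: a list of generating relations (x, y) on labels 'I_k
   (label 1 of the paper is ordinal 0, etc.), each meaning "x > y". *)
Definition pop (k : nat) := seq ('I_k * 'I_k).

Definition contains_pop (k n : nat) (p : pop k) (s : 'S_n) : bool :=
  [exists f : {ffun 'I_k -> 'I_n},
     [forall i : 'I_k, forall j : 'I_k, (i < j)%N ==> (f i < f j)%N]
     && all (fun r => (s (f r.2) < s (f r.1))%N) p].

Definition avoids_pop (k n : nat) (p : pop k) (s : 'S_n) : bool :=
  ~~ contains_pop p s.

Definition num_avoiders (k : nat) (p : pop k) (n : nat) : nat :=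
  #|[set s : 'S_n | avoids_pop p s]|.

Definition p45 : pop 5 :=
  [:: (inord 0, inord 1); (inord 0, inord 2); (inord 3, inord 1); (inord 3, inord 2)].

Definition gf_trunc (a : nat -> nat) (n : nat) : {poly int} :=
  \sum_(k < n.+1) ((a k)%:Z)%:P * 'X^k.

Definition numer45 : {poly int} := Poly [:: 1; -7; 14; -6; 4]%R.
Definition denom45 : {poly int} := ((Poly [:: 1; -4; 2]) ^+ 2)%R.

(* Main.v *)
Require Import Defs.
From HB Require Import structures.
From mathcomp Require Import all_boot all_order all_algebra all_fingroup.
From mathcomp Require Import ring zify.
From Stdlib Require Import Lia.
Set Implicit Arguments. Unset Strict Implicit. Unset Printing Implicit Defensive.

Section CL.
Variable n : nat.

Lemma card_lift (i0 j0 : 'I_n.+1) (P : pred 'S_n.+1) :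
  #|[set s | P s & s i0 == j0]| = #|[set t : 'S_n | P (lift_perm i0 j0 t)]|.
Proof.
rewrite -!sum1_card.
rewrite (reindex (lift_perm i0 j0)); last first.
  pose ulsf i (s : 'S_n.+1) k := odflt k (unlift (s i) (s (lift i k))).
  have ulsfK i (s : 'S_n.+1) k: lift (s i) (ulsf i s k) = s (lift i k).
    rewrite /ulsf; have:= neq_lift i k.
    by rewrite -(can_eq (permK s)) => /unlift_some[] ? ? ->.
  have inj_ulsf: injective (ulsf i0 _).
    move=> s; apply: can_inj (ulsf (s i0) s^-1%g) _ => k'.
    by rewrite {1}/ulsf ulsfK !permK liftK.
  exists (fun s => perm (inj_ulsf s)) => [s _ | s].
    by apply/permP=> k'; rewrite permE /ulsf lift_perm_lift lift_perm_id liftK.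
  rewrite inE => /andP[_] /eqP si0; apply/permP=> k.
  case: (unliftP i0 k) => [k'|] ->; rewrite ?lift_perm_id //.
  by rewrite lift_perm_lift -si0 permE ulsfK.
apply: eq_bigl => t; rewrite !inE lift_perm_id eqxx andbT //.
Qed.
End CL.

Definition occ n (s : 'S_n) (i1 i2 i3 i4 : 'I_n) : bool :=
  [&& (i1 < i2)%N, (i2 < i3)%N, (i3 < i4)%N, (s i2 < s i1)%N, (s i3 < s i1)%N,
      (s i2 < s i4)%N & (s i3 < s i4)%N].

Definition cq n (s : 'S_n) : bool :=
  [exists i1, exists i2, exists i3, exists i4, occ s i1 i2 i3 i4].

Lemma lift_ltn n (h : 'I_n.+1) (a b : 'I_n) : (lift h a < lift h b)%N = (a < b)%N.
Proof. by rewrite /= !ltnNge leq_bump2. Qed.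

Lemma cqP n (s : 'S_n) : reflect (exists i1 i2 i3 i4, occ s i1 i2 i3 i4) (cq s).
Proof.
apply: (iffP idP).
  by case/existsP=> i1 /existsP[i2] /existsP[i3] /existsP[i4] H; exists i1, i2, i3, i4.
by case=> i1 [i2 [i3 [i4 H]]]; apply/existsP; exists i1; apply/existsP; exists i2;
  apply/existsP; exists i3; apply/existsP; exists i4.
Qed.

Lemma cq_lift_up n (i0 j : 'I_n.+1) (t : 'S_n) : cq t -> cq (lift_perm i0 j t).
Proof.
case/cqP=> i1 [i2 [i3 [i4]]]; rewrite /occ => H.
apply/cqP; exists (lift i0 i1), (lift i0 i2), (lift i0 i3), (lift i0 i4).
by rewrite /occ !lift_perm_lift !lift_ltn.
Qed.

Lemma cq_lift_down n (i0 j : 'I_n.+1) (t : 'S_n) (i1 i2 i3 i4 : 'I_n.+1) :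
  i1 != i0 -> i2 != i0 -> i3 != i0 -> i4 != i0 ->
  occ (lift_perm i0 j t) i1 i2 i3 i4 -> cq t.
Proof.
case: (unliftP i0 i1) => [k1 ->|->]; last by rewrite eqxx.
case: (unliftP i0 i2) => [k2 ->|->]; last by rewrite eqxx.
case: (unliftP i0 i3) => [k3 ->|->]; last by rewrite eqxx.
case: (unliftP i0 i4) => [k4 ->|->]; last by rewrite eqxx.
move=> _ _ _ _.
rewrite /occ !lift_perm_lift !lift_ltn => H.
by apply/cqP; exists k1, k2, k3, k4.
Qed.

Lemma small2 n (s : 'S_n) (a b c : 'I_n) : (a < b)%N -> (s a < s c)%N -> (s b < s c)%N ->
  (s c <= 1)%N -> False.
Proof.
move=> ab ac bc c1.
have ha : nat_of_ord (s a) = 0%N by lia.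
have hb : nat_of_ord (s b) = 0%N by lia.
have : s a = s b by apply: val_inj; rewrite /= ha hb.
by move/perm_inj => E; move: ab; rewrite E ltnn.
Qed.

Lemma cq_last_small n (j : 'I_n.+1) (t : 'S_n) : (j <= 1)%N ->
  cq (lift_perm ord_max j t) = cq t.
Proof.
move=> j1; apply/idP/idP; last exact: cq_lift_up.
case/cqP=> i1 [i2 [i3 [i4 H]]].
have H' := H; move: H'; rewrite /occ => /andP[h12 /andP[h23 /andP[h34 /andP[_ /andP[_ /andP[a4 b4]]]]]].
have ne (i : 'I_n.+1) : (i < i4)%N -> i != ord_max.
  move=> hi; apply/eqP=> E; move: hi; rewrite E /=; have := ltn_ord i4; lia.
apply: (cq_lift_down (ne _ _) (ne _ _) (ne _ _) _ H); try lia.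
apply/eqP=> E; apply: (small2 h23 a4 b4); by rewrite E lift_perm_id.
Qed.

Lemma cq_first_small n (x : 'I_n.+1) (t : 'S_n) : (x <= 1)%N ->
  cq (lift_perm ord0 x t) = cq t.
Proof.
move=> x1; apply/idP/idP; last exact: cq_lift_up.
case/cqP=> i1 [i2 [i3 [i4 H]]].
have H' := H; move: H'; rewrite /occ => /andP[h12 /andP[h23 /andP[h34 /andP[a1 /andP[b1 /andP[_ _]]]]]].
have ne (i : 'I_n.+1) : (i1 < i)%N -> i != ord0.
  by move=> hi; apply/eqP=> E; move: hi; rewrite E.
apply: (cq_lift_down _ (ne _ _) (ne _ _) (ne _ _) H); try lia.
apply/eqP=> E; apply: (small2 h23 a1 b1); by rewrite E lift_perm_id.
Qed.

Lemma first_small n (p : 'S_n.+1) : ~~ cq p -> (2 <= p ord_max)%N -> (p ord0 <= 1)%N.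
Proof.
move=> av pm; rewrite leqNgt; apply/negP => p0.
have n1 : (1 < n.+1)%N by have := ltn_ord (p ord_max); lia.
pose v0 : 'I_n.+1 := inord 0; pose v1 : 'I_n.+1 := inord 1.
have ev0 : nat_of_ord v0 = 0%N by rewrite /v0 inordK.
have ev1 : nat_of_ord v1 = 1%N by rewrite /v1 inordK.
pose a := (p^-1)%g v0; pose b := (p^-1)%g v1.
have pa : nat_of_ord (p a) = 0%N by rewrite /a permKV.
have pb : nat_of_ord (p b) = 1%N by rewrite /b permKV.
have a0 : (0 < a)%N by rewrite lt0n; apply/eqP=> E; move: pa;
  rewrite (_ : a = ord0) ?E //; [lia | exact: val_inj].
have b0 : (0 < b)%N by rewrite lt0n; apply/eqP=> E; move: pb;
  rewrite (_ : b = ord0) ?E //; [lia | exact: val_inj].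
have am : (a < n)%N.
  have := ltn_ord a; rewrite ltnS leq_eqVlt => /orP[/eqP E|//].
  by move: pa; rewrite (_ : a = ord_max) ?E //; [lia | exact: val_inj].
have bm : (b < n)%N.
  have := ltn_ord b; rewrite ltnS leq_eqVlt => /orP[/eqP E|//].
  by move: pb; rewrite (_ : b = ord_max) ?E //; [lia | exact: val_inj].
move/negP: av; apply; apply/cqP.
case: (ltngtP a b) => ab.
- exists ord0, a, b, ord_max; rewrite /occ /= pa pb; lia.
- exists ord0, b, a, ord_max; rewrite /occ /= pa pb; lia.
- by move: pa pb; rewrite (_ : a = b) //; [move=> -> | exact: val_inj].
Qed.

Lemma cp_last n (j : 'I_n.+1) (u : 'S_n) :
  contains_pop p45 (lift_perm ord_max j u) = cq u.
Proof.
set p := lift_perm ord_max j u.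
apply/idP/idP.
  case/existsP=> f /andP[/forallP inc]; rewrite /p45 /= andbT.
  case/andP=> r01 /andP[r02 /andP[r31 r32]].
  have incr (x y : nat) : (x < y < 5)%N -> (f (inord x) < f (inord y))%N.
    move=> /andP[xy y5]; have := inc (inord x) => /forallP /(_ (inord y)).
    by rewrite !inordK //; [move/implyP; apply | lia].
  have ne (x : nat) : (x < 4)%N -> f (inord x) != ord_max.
    move=> x4; apply/eqP=> E; have h := incr x 4%N; rewrite x4 /= E in h.
    have := ltn_ord (f (inord 4)); have := h isT; simpl; lia.
  apply: (cq_lift_down (j:=j) (ne 0%N _) (ne 1%N _) (ne 2%N _) (ne 3%N _)) => //.
  by rewrite /occ -/p r01 r02 r31 r32 !incr.
case/cqP=> k1 [k2 [k3 [k4 H]]].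
have H' := H; move: H'; rewrite /occ => /andP[h12 /andP[h23 /andP[h34 /andP[a1 /andP[b1 /andP[a4 b4]]]]]].
apply/existsP.
exists [ffun x : 'I_5 => nth ord_max [:: lift ord_max k1; lift ord_max k2; lift ord_max k3; lift ord_max k4] x].
apply/andP; split.
  have bm (k : 'I_n) : bump n k = k by rewrite /bump leqNgt ltn_ord.
  have k4n := ltn_ord k4.
  apply/forallP=> x; apply/forallP=> y; apply/implyP.
  rewrite !ffunE.
  case: x => [[|[|[|[|[|?]]]]] Hx] //; case: y => [[|[|[|[|[|?]]]]] Hy] //=; rewrite ?bm; lia.
rewrite /p45 /= !ffunE !inordK //= /p !lift_perm_lift.
by rewrite !lift_ltn a1 b1 a4 b4.
Qed.

Lemma card_part n (P : pred 'S_n.+1) (i0 : 'I_n.+1) :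
  #|[set s | P s]| = \sum_(j < n.+1) #|[set s | P s & s i0 == j]|.
Proof.
rewrite -sum1_card (partition_big (fun s : 'S_n.+1 => s i0) (fun _ => true)) //=.
apply: eq_bigr => j _; rewrite -sum1_card; apply: eq_bigl => s; by rewrite !inE.
Qed.

Definition bq n := #|[set t : 'S_n | ~~ cq t]|.
Definition Eq n (j : nat) := #|[set t : 'S_n.+1 | ~~ cq t & nat_of_ord (t ord_max) == j]|.

Lemma R1 n : bq n.+1 = \sum_(j < n.+1) Eq n j.
Proof.
rewrite /bq (card_part _ ord_max); apply: eq_bigr => j _.
by rewrite /Eq; apply: eq_card => t; rewrite !inE.
Qed.

Lemma R2 n j : (j <= 1)%N -> (j < n.+1)%N -> Eq n j = bq n.
Proof.
move=> j1 jn; pose jj : 'I_n.+1 := Ordinal jn.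
rewrite /Eq (_ : j = jj) //.
rewrite (eq_card (B := [set t : 'S_n.+1 | ~~ cq t & t ord_max == jj])); last first.
  by move=> t; rewrite !inE.
rewrite card_lift /bq; apply: eq_card => t; rewrite !inE cq_last_small //.
Qed.

Lemma bump_eq x m j : (x <= 1)%N -> (2 <= j)%N -> (bump x m == j) = (m == j.-1).
Proof. move=> x1 j2; rewrite /bump; case: leqP => h /=; apply/eqP/eqP; lia. Qed.

Lemma R3 n j : (2 <= j)%N -> Eq n.+1 j = 2 * Eq n j.-1.
Proof.
move=> j2.
pose x0 : 'I_n.+2 := ord0. pose x1 : 'I_n.+2 := inord 1.
have ex1 : nat_of_ord x1 = 1%N by rewrite /x1 inordK.
rewrite /Eq -!sum1_card (bigID (fun p : 'S_n.+2 => p ord0 == x0)) /=.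
have side (x : 'I_n.+2) : (x <= 1)%N ->
    \sum_(i in [set t : 'S_n.+2 | ~~ cq t & nat_of_ord (t ord_max) == j] | i ord0 == x) 1
    = #|[set t : 'S_n.+1 | ~~ cq t & nat_of_ord (t ord_max) == j.-1]|.
  move=> xs.
  rewrite sum1dep_card.
  rewrite (eq_card (B := [set p : 'S_n.+2 | (~~ cq p && (nat_of_ord (p ord_max) == j)) & p ord0 == x])); last first.
    by move=> t; rewrite !inE.
  rewrite card_lift; apply: eq_card => t; rewrite !inE cq_first_small //.
  have -> : (ord_max : 'I_n.+2) = lift ord0 ord_max by apply: val_inj.
  by rewrite lift_perm_lift /= bump_eq.
rewrite side // (eq_bigl (fun i => (i \in [set t : 'S_n.+2 | ~~ cq t & nat_of_ord (t ord_max) == j]) && (i ord0 == x1))).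
  by rewrite side ?ex1 // sum1_card mul2n -addnn.
move=> p; rewrite !inE; case: (boolP (~~ cq p)) => //= av.
case: (boolP (nat_of_ord (p ord_max) == j)) => //= /eqP pm.
have := first_small av; rewrite pm => /(_ j2) p1.
apply/idP/idP.
  move=> ne; apply/eqP; apply: val_inj; rewrite /= ex1.
  have : nat_of_ord (p ord0) != 0%N by move: ne; apply: contra => /eqP E; apply/eqP/val_inj.
  lia.
by move/eqP=> ->; apply/eqP => /(congr1 val); rewrite /= ex1.
Qed.

Lemma bq0 : bq 0 = 1%N.
Proof.
rewrite /bq (eq_card (B := [set: 'S_0])); first by rewrite cardsT card_Sn.
by move=> t; rewrite !inE; apply/negP => /cqP[[]].
Qed.

Lemma bq1 : bq 1 = 1%N.
Proof. by rewrite R1 big_ord1 R2 // bq0. Qed.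

Lemma brec n : bq n.+2 + 2 * bq n = 4 * bq n.+1.
Proof.
rewrite R1 !big_ord_recl.
rewrite (eq_bigr (fun i : 'I_n => 2 * Eq n i.+1)); last first.
  by move=> i _; rewrite R3.
rewrite -big_distrr /=.
have E : bq n.+1 = bq n + \sum_(i < n) Eq n i.+1.
  by rewrite R1 big_ord_recl (R2 (j := 0%N)).
rewrite (R2 (n := n.+1)) // (R2 (j := 1%N) (n := n.+1)) // E.
set S := \sum_(i < n) Eq n i.+1. lia.
Qed.

Lemma a0 : num_avoiders p45 0 = 1%N.
Proof.
rewrite /num_avoiders (eq_card (B := [set: 'S_0])); first by rewrite cardsT card_Sn.
move=> t; rewrite !inE /avoids_pop /contains_pop; apply/negP => /existsP[f _].
by case: (f ord0).
Qed.

Lemma aS n : num_avoiders p45 n.+1 = n.+1 * bq n.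
Proof.
rewrite /num_avoiders (card_part _ ord_max).
rewrite (eq_bigr (fun _ => bq n)); first by rewrite sum_nat_const card_ord.
move=> j _.
rewrite (eq_card (B := [set s : 'S_n.+1 | avoids_pop p45 s & s ord_max == j])); last first.
  by move=> s; rewrite !inE.
rewrite card_lift /bq; apply: eq_card => t; rewrite !inE /avoids_pop cp_last //.
Qed.

Import GRing.Theory.
Local Open Scope ring_scope.
Lemma denomE : denom45 = Poly [:: 1; -8; 20; -16; 4].
Proof.
rewrite /denom45 /= !cons_poly_def.
ring.
Qed.

Lemma coef_gf (a : nat -> nat) n j : (j <= n)%N -> (gf_trunc a n)`_j = (a j)%:Z.
Proof.
move=> hj; rewrite /gf_trunc coef_sum (bigD1 (Ordinal (hj : (j < n.+1)%N))) //=.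
rewrite coefCM coefXn eqxx mulr1 big1 ?addr0 // => k hk.
rewrite coefCM coefXn; case: eqP => [E|]; last by rewrite mulr0.
by case/eqP: hk; apply: val_inj.
Qed.

Definition av := num_avoiders p45.

Lemma bq2 : bq 2 = 2%N.
Proof. have := brec 0; rewrite bq0 bq1; lia. Qed.
Lemma bq3 : bq 3 = 6%N.
Proof. have := brec 1; rewrite bq1 bq2; lia. Qed.

Lemma av_rec m : (av m.+4.+1 + 20 * av m.+3 + 4 * av m.+1 = 8 * av m.+4 + 16 * av m.+2)%N.
Proof.
rewrite /av !aS.
have h0 := brec m; have h1 := brec m.+1; have h2 := brec m.+2.
nia.
Qed.

Theorem theorem4p5 :
  forall n i : nat, (i <= n)%N ->
    ((gf_trunc (num_avoiders p45) n * denom45)`_i = numer45`_i)%R.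
Proof.
move=> n i hi; rewrite denomE coefMr /numer45 coef_Poly.
rewrite (eq_bigr (fun j : 'I_i.+1 => (av (i - j))%:Z * [:: 1; -8; 20; -16; 4]`_j)); last first.
  move=> j _; rewrite coef_Poly coef_gf //; have := ltn_ord j; lia.
have av0 : av 0 = 1%N by exact: a0.
have av1 : av 1 = 1%N by rewrite /av aS bq0.
have av2 : av 2 = 2%N by rewrite /av aS bq1.
have av3 : av 3 = 6%N by rewrite /av aS bq2.
have av4 : av 4 = 24%N by rewrite /av aS bq3.
case: i hi => [|[|[|[|m]]]] hi.
- by rewrite big_ord_recl big_ord0 /= av0.
- by rewrite !big_ord_recl big_ord0 /= av0 av1.
- by rewrite !big_ord_recl big_ord0 /= av0 av1 av2.
- by rewrite !big_ord_recl big_ord0 /= av0 av1 av2 av3.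
rewrite !big_ord_recl /= big1; last first.
  by move=> j _; rewrite nth_nil mulr0.
rewrite /bump /= !subSS !subn0.
clear hi; case: m => [|k] /=.
  by rewrite av0 av1 av2 av3 av4.
rewrite nth_nil.
have h := av_rec k.
lia.
Qed.
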